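(* Consider the two-dimensional map defined below with heterogeneity in speculative trading strategies, i.e. $w^F\neq 0$ and $w^C\neq 0$. Then, in addition to the equilibrium $P_1=(-\Omega\Delta y^{BP},\Delta y^{BP})$, the map admits two additional equilibria $P_2=(\bar e_2,\Delta\bar y_2)$ and $P_3=(\bar e_3,\Delta\bar y_3)$ given by $$\bar e_{2,3}=-\Omega\Delta y^{BP}\pm\sqrt{\frac{w^C}{w^F}},\qquad \Delta\bar y_{2,3}=\Delta y^{BP}.$$
   Context: The state variables are the (log) exchange rate $e_t$ and the output growth rate $\Delta y_t$, evolving according to the map $$e_t=e_{t-1}+(\mu+\rho)\left[w^F\left(-\Omega\Delta y_{t-1}-e_{t-1}\right)^3+w^C\left(e_{t-1}+\Omega\Delta y_{t-1}\right)\right],$$ $$\Delta y_t=\Delta y_{t-1}+w^{flex}\beta\left\{\Delta y^{BP}-\gamma\left[w^F\left(-\Omega\Delta y_{t-1}-e_{t-1}\right)^3+w^C\left(e_{t-1}+\Omega\Delta y_{t-1}\right)\right]-\Delta y_{t-1}\right\},$$ where $\mu>0$, $\rho>0$, $0<\beta<1$, $0<\Omega<1$, $0<w^{flex}<1$, $\Delta y^{BP}\in\mathbb{R}$ is a constant, $\gamma=\frac{(1-\theta)(\mu+\rho)}{\theta\pi}>0$ with $\theta\in(0,1)$, $\pi>0$, and $w^F,w^C\in(0,1)$ are the shares of fundamentalists and chartists with $w^F+w^C=1$. An equilibrium is a fixed point $(\bar e,\Delta\bar y)$ of this map. *)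

(* Defs.v *)
From Stdlib Require Import Reals Lra.
Open Scope R_scope.

Definition gamma_coef (theta piP mu rho : R) : R :=
  (1 - theta) * (mu + rho) / (theta * piP).

Definition spec_term (wF wC Omega e dy : R) : R :=
  wF * (- Omega * dy - e) ^ 3 + wC * (e + Omega * dy).

Definition exch_map (mu rho beta Omega wflex dyBP theta piP wF wC : R)
  (p : R * R) : R * R :=
  let e := fst p in
  let dy := snd p in
  (e + (mu + rho) * spec_term wF wC Omega e dy,
   dy + wflex * beta * (dyBP - gamma_coef theta piP mu rho
                               * spec_term wF wC Omega e dy - dy)).

Definition is_equilibrium (mu rho beta Omega wflex dyBP theta piP wF wC : R)
  (p : R * R) : Prop :=
  exch_map mu rho beta Omega wflex dyBP theta piP wF wC p = p.

(* Main.v *)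
Require Import Defs.
From Stdlib Require Import Reals Lra Psatz.
Open Scope R_scope.

Theorem proposition2
  (mu rho beta Omega wflex dyBP theta piP wF wC : R)
  (Hmu : 0 < mu) (Hrho : 0 < rho)
  (Hbeta : 0 < beta < 1) (HOmega : 0 < Omega < 1)
  (Hwflex : 0 < wflex < 1)
  (Htheta : 0 < theta < 1) (Hpi : 0 < piP)
  (HwF : 0 < wF < 1) (HwC : 0 < wC < 1) (Hsum : wF + wC = 1) :
  let P1 := (- Omega * dyBP, dyBP) in
  let P2 := (- Omega * dyBP + sqrt (wC / wF), dyBP) in
  let P3 := (- Omega * dyBP - sqrt (wC / wF), dyBP) in
  P1 <> P2 /\ P1 <> P3 /\ P2 <> P3 /\
  (forall p : R * R,
     is_equilibrium mu rho beta Omega wflex dyBP theta piP wF wC p <->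
     (p = P1 \/ p = P2 \/ p = P3)).
Proof.
  intros P1 P2 P3. unfold P1, P2, P3.
  set (s := sqrt (wC / wF)).
  assert (Hq : 0 < wC / wF) by (apply Rdiv_lt_0_compat; lra).
  assert (Hs : 0 < s) by (apply sqrt_lt_R0; exact Hq).
  assert (Hss : s * s = wC / wF) by (apply sqrt_sqrt; lra).
  assert (HwFs : wF * (s * s) = wC) by (rewrite Hss; field; lra).
  split; [intro H; injection H; lra|].
  split; [intro H; injection H; lra|].
  split; [intro H; injection H; lra|].
  intros [e dy]. unfold is_equilibrium, exch_map, spec_term; cbn [fst snd].
  split.
  - intro H. assert (H1 := f_equal fst H); assert (H2 := f_equal snd H); cbn [fst snd] in H1, H2.
    set (Sp := wF * (- Omega * dy - e) ^ 3 + wC * (e + Omega * dy)) in *.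
    assert (HS : Sp = 0).
    { assert (Hm : (mu + rho) * Sp = 0) by (apply (Rplus_eq_reg_l e); rewrite Rplus_0_r; exact H1).
      destruct (Rmult_integral _ _ Hm); lra. }
    rewrite HS in H2.
    assert (Hd : dy = dyBP).
    { assert (Hm : (wflex * beta) * (dyBP - dy) = 0) by lra.
      destruct (Rmult_integral _ _ Hm) as [H0|H0]; [nra|lra]. }
    subst dy.
    set (x := e + Omega * dyBP).
    assert (Hx : wF * (x * ((s - x) * (s + x))) = 0).
    { unfold Sp in HS. unfold x. rewrite <- HwFs in HS. nra. }
    destruct (Rmult_integral _ _ Hx) as [H0|H0]; [lra|].
    destruct (Rmult_integral _ _ H0) as [H3|H3].
    + left. f_equal. unfold x in H3; lra.
    + destruct (Rmult_integral _ _ H3) as [H4|H4].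
      * right; left. f_equal. unfold x in H4; lra.
      * right; right. f_equal. unfold x in H4; lra.
  - intros [H|[H|H]]; injection H as -> ->; f_equal.
    all: rewrite <- HwFs; ring.
Qed.
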